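(* Let $\psi\colon\mathbb R^d\to\mathbb R\cup\{+\infty\}$ be a lower semi-continuous convex function with $u\in\operatorname{dom}\psi$. Set $f=e^{-\psi}$ and $\bar u=(u,f(u))$. Let $\bar v=(v,\nu)\in\mathbb R^d\times\mathbb R$ with $\nu\ne0$. Then the following are equivalent: (1) $\bar v\in N_{\mathrm{lift}(f)}(\bar u)$ and $\langle\bar u,\bar v\rangle=1$; (2) there is $p\in\partial\psi(u)$ with $1+\langle p,u\rangle>0$ and $\bar v=\dfrac{(p,1/f(u))}{1+\langle p,u\rangle}$.
   Context: $\operatorname{dom}\psi=\{x:\psi(x)<\infty\}$; $\partial\psi(u)=\{p:\psi(y)\ge\psi(u)+\langle p,y-u\rangle\ \forall y\}$. $\operatorname{supp}f=\{x:f(x)>0\}$. Lifting $\mathrm{lift}(f)=\{(x,y)\in\mathbb R^d\times\mathbb R:x\in\overline{\operatorname{supp}f},|y|\le f(x)\}$. Fréchet normal cone $N_A(a_0)=\{w:\forall\varepsilon>0\,\exists\delta>0:\langle w,a-a_0\rangle\le\varepsilon|a-a_0|\ \forall a\in A,|a-a_0|\le\delta\}$. *)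

(* Defs.v *)
From HB Require Import structures.
From mathcomp Require Import all_boot all_order all_algebra.
From mathcomp Require Import all_classical all_reals all_analysis.
Set Implicit Arguments. Unset Strict Implicit. Unset Printing Implicit Defensive.
Import Order.TTheory GRing.Theory Num.Theory.
Import numFieldNormedType.Exports.
Local Open Scope classical_set_scope.
Local Open Scope ring_scope.

Section Defs.
Variables (R : realType) (d : nat).

Definition dotv (x y : 'rV[R]_d) : R := \sum_(i < d) x 0 i * y 0 i.

Definition dotp (a b : 'rV[R]_d * R) : R := dotv a.1 b.1 + a.2 * b.2.
Definition normp (a : 'rV[R]_d * R) : R := Num.sqrt (dotp a a).
Definition subp (a b : 'rV[R]_d * R) : 'rV[R]_d * R := (a.1 - b.1, a.2 - b.2).

Definition edom (psi : 'rV[R]_d -> \bar R) : set 'rV[R]_d :=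
  [set x | (psi x < +oo)%E].

Definition convex_ext (psi : 'rV[R]_d -> \bar R) : Prop :=
  forall (x y : 'rV[R]_d) (t : R), 0 < t < 1 ->
    (psi (t *: x + (1 - t) *: y)%R <= t%:E * psi x + (1 - t)%:E * psi y)%E.

Definition subdiff (psi : 'rV[R]_d -> \bar R) (u : 'rV[R]_d) : set 'rV[R]_d :=
  [set p | forall y, (psi u + (dotv p (y - u))%:E <= psi y)%E].

Definition expneg (psi : 'rV[R]_d -> \bar R) (x : 'rV[R]_d) : R :=
  match psi x with
  | EFin r => expR (- r)
  | +oo%E => 0
  | -oo%E => 0 (* never used: psi does not take the value -oo *)
  end.

Definition supp (f : 'rV[R]_d -> R) : set 'rV[R]_d := [set x | 0 < f x].

Definition liftf (f : 'rV[R]_d -> R) : set ('rV[R]_d * R) :=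
  [set a | closure (supp f) a.1 /\ `|a.2| <= f a.1].

Definition frechet_normal (A : set ('rV[R]_d * R)) (a0 : 'rV[R]_d * R)
  : set ('rV[R]_d * R) :=
  [set w | forall eps : R, 0 < eps -> exists2 delta : R, 0 < delta &
     forall a, A a -> normp (subp a a0) <= delta ->
       dotp w (subp a a0) <= eps * normp (subp a a0)].

End Defs.

(* Main.v *)
Require Import Defs.
From mathcomp Require Import all_boot all_order all_algebra.
From mathcomp Require Import all_classical all_reals all_analysis.
From mathcomp Require Import ring lra.
Import Order.TTheory GRing.Theory Num.Theory.
Import numFieldNormedType.Exports.
Local Open Scope classical_set_scope.
Local Open Scope ring_scope.

Section Helpers.
Variables (R : realType) (d : nat).
Implicit Types (a b c h p w : 'rV[R]_d).

Lemma mul_self_ge0 (x : R) : 0 <= x * x.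
Proof. by rewrite -expr2 sqr_ge0. Qed.

Lemma dotvC a b : dotv a b = dotv b a.
Proof. by apply: eq_bigr => i _; rewrite mulrC. Qed.

Lemma dotvZl k a b : dotv (k *: a) b = k * dotv a b.
Proof. rewrite /dotv mulr_sumr; apply: eq_bigr => i _; by rewrite mxE mulrA. Qed.

Lemma dotvBr a b c : dotv a (b - c) = dotv a b - dotv a c.
Proof. rewrite /dotv -sumrB; apply: eq_bigr => i _; by rewrite !mxE mulrBr. Qed.

Lemma dotv0r a : dotv a 0 = 0.
Proof. rewrite /dotv big1 // => i _; by rewrite mxE mulr0. Qed.

Lemma dotv_ge0 a : 0 <= dotv a a.
Proof. apply: sumr_ge0 => i _; exact: mul_self_ge0. Qed.

Definition nv a := Num.sqrt (dotv a a).

Lemma nv_ge0 a : 0 <= nv a. Proof. exact: sqrtr_ge0. Qed.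

Lemma coord_le a i : `|a 0 i| <= nv a.
Proof.
rewrite /nv -sqrtr_sqr ler_wsqrtr // /dotv (bigD1 i) //= expr2 lerDl.
apply: sumr_ge0 => j _; exact: mul_self_ge0.
Qed.

Lemma dot_bound p h : `|dotv p h| <= (\sum_(i < d) `|p 0 i|) * nv h.
Proof.
rewrite /dotv mulr_suml; apply: (le_trans (ler_norm_sum _ _ _)).
apply: ler_sum => i _; rewrite normrM ler_wpM2l //; exact: coord_le.
Qed.

Lemma sum_abs_ge0 p : 0 <= \sum_(i < d) `|p 0 i|.
Proof. by apply: sumr_ge0 => i _. Qed.

Lemma normpE h (s : R) : normp (h, s) = Num.sqrt (dotv h h + s * s).
Proof. by []. Qed.

Lemma nv_le_normp h (s:R) : nv h <= normp (h, s).
Proof. rewrite normpE ler_wsqrtr // lerDl; exact: mul_self_ge0. Qed.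

Lemma normp_le h (s:R) : normp (h, s) <= nv h + `|s|.
Proof.
rewrite normpE -[X in _ <= X]ger0_norm ?addr_ge0 ?nv_ge0 //.
rewrite -sqrtr_sqr ler_wsqrtr //.
have h1 := sqr_sqrtr (dotv_ge0 h).
have h2 : `|s| ^+ 2 = s * s by rewrite -normrX ger0_norm ?expr2 ?mul_self_ge0.
have h3 := nv_ge0 h; have h4 := normr_ge0 s.
rewrite /nv in h3 *. set q := Num.sqrt _ in h1 h3 *.
rewrite sqrrD h2 -h1. nra.
Qed.

Lemma nvZ (t:R) h : 0 <= t -> nv (t *: h) = t * nv h.
Proof.
move=> t0; rewrite /nv dotvZl dotvC dotvZl mulrA sqrtrM ?mul_self_ge0 //.
by rewrite -expr2 sqrtr_sqr ger0_norm.
Qed.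

Lemma exp_up (s : R) : -1 < s -> expR (- s) <= (1 + s)^-1.
Proof.
move=> hs; rewrite (@expRN R) lef_pV2 ?posrE ?expR_gt0 ?expR_ge1Dx //.
lra.
Qed.

Lemma exp_quad (s : R) : `|s| <= 2^-1 -> expR (- s) - 1 + s <= 2 * s ^+ 2.
Proof.
move=> hs.
have [h1 h2] : -(2^-1) <= s /\ s <= 2^-1 by split; [|]; move: hs; rewrite ler_norml => /andP[].
have hp : 0 < 1 + s by lra.
have he := @exp_up s ltac:(lra).
set w := (1 + s)^-1 in he.
have hw : w * (1 + s) = 1 by rewrite mulVf // gt_eqF.
have hw0 : 0 < w by rewrite invr_gt0.
nra.
Qed.

Lemma exp_lin (s : R) : `|s| <= 2^-1 -> `|expR (- s) - 1| <= 2 * `|s|.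
Proof.
move=> hs.
have [h1 h2] : -(2^-1) <= s /\ s <= 2^-1 by split; [|]; move: hs; rewrite ler_norml => /andP[].
have hp : 0 < 1 + s by lra.
have he := @exp_up s ltac:(lra).
have hl := expR_ge1Dx (- s).
set w := (1 + s)^-1 in he.
have hw : w * (1 + s) = 1 by rewrite mulVf // gt_eqF.
have hw0 : 0 < w by rewrite invr_gt0.
rewrite ler_norml; apply/andP; split.
- have : 0 <= `|s| by []. have := ler_norm s. have := ler_normr s. nra.
- have := ler_norm s. have : - s <= `|s| by rewrite -normrN ler_norm. nra.
Qed.

End Helpers.
Arguments dotvC {R d}. Arguments dotvZl {R d}. Arguments dotvBr {R d}.
Arguments dotv0r {R d}. Arguments dotv_ge0 {R d}. Arguments nv {R d}.
Arguments nv_ge0 {R d}. Arguments coord_le {R d}. Arguments dot_bound {R d}.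
Arguments sum_abs_ge0 {R d}. Arguments normpE {R d}. Arguments nv_le_normp {R d}.
Arguments normp_le {R d}. Arguments nvZ {R d}. Arguments exp_up {R}.
Arguments exp_quad {R}. Arguments exp_lin {R}. Arguments mul_self_ge0 {R}.

Lemma expneg_fin {R : realType} {d : nat} {psi : 'rV[R]_d -> \bar R} {x r} :
  psi x = r%:E -> expneg psi x = expR (- r).
Proof. by rewrite /expneg => ->. Qed.

Lemma expneg_inf {R : realType} {d : nat} {psi : 'rV[R]_d -> \bar R} {x} :
  psi x = +oo%E -> expneg psi x = 0.
Proof. by rewrite /expneg => ->. Qed.

Theorem mainTheorem8 (R : realType) (d : nat) (psi : 'rV[R]_d -> \bar R)
  (u v : 'rV[R]_d) (nu : R) :
  (forall x, psi x != -oo%E) ->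
  lower_semicontinuous psi ->
  convex_ext psi ->
  edom psi u ->
  nu != 0 ->
  ((frechet_normal (liftf (expneg psi)) (u, expneg psi u) (v, nu) /\
    dotp (u, expneg psi u) (v, nu) = 1)
   <->
   (exists p, subdiff psi u p /\ 0 < 1 + dotv p u /\
      (v, nu) = ((1 + dotv p u)^-1 *: p,
                 (expneg psi u)^-1 / (1 + dotv p u)))).
Proof.
move=> hninf _ hconv hdom hnu.
have [r hr] : exists r, psi u = r%:E.
  case E: (psi u) => [r| |]; first by exists r.
  - by move: hdom; rewrite /edom /= E ltxx.
  - by have := hninf u; rewrite E.
have hfu := expneg_fin hr.
set fu := expneg psi u in hfu *.
have fu0 : 0 < fu by rewrite hfu expR_gt0.
split => [[hN hdot] | [p [hp [hc heq]]]].
  have nupos : 0 < nu.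
    rewrite lt_neqAle eq_sym hnu /= leNgt; apply/negP => hneg.
    have [del hdel H] := hN (- nu / 2) ltac:(lra).
    set s := Num.min del fu.
    have s0 : 0 < s by rewrite lt_min hdel fu0.
    have s1 : s <= del by rewrite ge_min lexx.
    have s2 : s <= fu by rewrite ge_min lexx orbT.
    have := H (u, fu - s).
    rewrite /subp /= subrr.
    have -> : fu - s - fu = - s by ring.
    have hn : normp (0 : 'rV[R]_d, - s) = s.
      by rewrite normpE dotv0r add0r mulrNN -expr2 sqrtr_sqr gtr0_norm.
    rewrite hn /dotp /= dotv0r add0r => /(_ _ s1).
    have hl : liftf (expneg psi) (u, fu - s).
      split; first by apply: subset_closure; rewrite /supp /=.
      rewrite /= -/fu ger0_norm; lra.
    move=> /(_ hl) hcon.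
    clear -hcon hneg s0; nra.
  set k := nu * fu.
  have k0 : 0 < k by rewrite mulr_gt0.
  set ki := k^-1.
  have hki : ki * k = 1 by rewrite mulVf // gt_eqF.
  have hki0 : 0 < ki by rewrite invr_gt0.
  exists (ki *: v).
  have hc : 1 + dotv (ki *: v) u = ki.
    rewrite dotvZl dotvC.
    move: hdot; rewrite /dotp /= => hdot.
    have -> : dotv u v = 1 - fu * nu by lra.
    rewrite /ki /k; field.
    by rewrite hnu gt_eqF.
  split; last split.
  - move=> y.
    case Ey: (psi y) => [ry| |]; last by have := hninf y; rewrite Ey.
      2: by rewrite leey.
    rewrite hr -EFinD lee_fin dotvZl.
    set w := y - u.
    set dl := ry - r.
    suff hcl : dotv v w <= k * dl.
      have : ki * dotv v w <= ki * (k * dl) by rewrite ler_wpM2l // ltW.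
      rewrite mulrA hki mul1r /dl; lra.
    apply/ler_addgt0Pr => e he.
    set M := nv w + 2 * fu * `|dl| + 1.
    have M0 : 0 < M.
      by rewrite /M ltr_pwDr // addr_ge0 ?nv_ge0 // mulr_ge0 // mulr_ge0 // ltW.
    have [del hdel H] := hN (e / M) (divr_gt0 he M0).
    set M' := M + 2 * `|dl|.
    have M'0 : 0 < M' by rewrite /M'; have := normr_ge0 dl; lra.
    set m := Num.min del 1.
    have m0 : 0 < m by rewrite lt_min hdel ltr01.
    have m1 : m <= del by rewrite ge_min lexx.
    have m2 : m <= 1 by rewrite ge_min lexx orbT.
    set t := Num.min (2^-1) (m / M').
    have t0 : 0 < t by rewrite lt_min divr_gt0 // andbT; lra.
    have t1 : t <= 2^-1 by rewrite ge_min lexx.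
    have t2 : t * M' <= m.
      have : t <= m / M' by rewrite ge_min lexx orbT.
      move=> /(ler_wpM2r (ltW M'0)); rewrite -mulrA mulVf ?gt_eqF // mulr1; apply.
    set xt := t *: y + (1 - t) *: u.
    have hxt : xt - u = t *: w.
      by rewrite /xt /w scalerBl scale1r scalerBr addrCA addrC addrK.
    have hcv := hconv y u t ltac:(apply/andP; split; lra).
    rewrite -/xt hr Ey -!EFinM -EFinD in hcv.
    case Ex: (psi xt) hcv => [z| |] hcv; last by have := hninf xt; rewrite Ex.
      2: by move: hcv; rewrite leNgt ltey.
    rewrite lee_fin in hcv.
    set E := expR (- (t * dl)).
    have E0 : 0 < E by rewrite expR_gt0.
    have hy' : fu * E <= expneg psi xt.
      rewrite (expneg_fin Ex) hfu /E -expRD ler_expR /dl; nra.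
    have hl : liftf (expneg psi) (xt, fu * E).
      split; first by apply: subset_closure; rewrite /supp /= (expneg_fin Ex) expR_gt0.
      by rewrite /= ger0_norm // mulr_ge0 // ltW.
    have hdlt : `|t * dl| <= 2^-1.
      rewrite normrM ger0_norm ?ltW //.
      have : 0 <= nv w + 2 * fu * `|dl| by rewrite addr_ge0 ?nv_ge0 // mulr_ge0 // mulr_ge0 // ltW.
      rewrite /M' /M in t2; nra.
    have hEl := exp_lin (t * dl) hdlt.
    have hEg := expR_ge1Dx (- (t * dl)).
    rewrite -/E in hEl hEg.
    set Nn := normp (t *: w, fu * E - fu).
    have hNn : Nn <= t * (M - 1).
      apply: le_trans (normp_le _ _) _.
      rewrite nvZ; last exact: ltW.
      rewrite /M.
      have -> : fu * E - fu = fu * (E - 1) by ring.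
      rewrite normrM (ger0_norm (ltW fu0)).
      rewrite normrM (ger0_norm (ltW t0)) in hEl.
      have : 0 <= fu by exact: ltW.
      have : 0 <= `|E - 1| by [].
      nra.
    have hNd : Nn <= del.
      apply: le_trans hNn _; apply: le_trans m1.
      rewrite /M' in t2.
      have : 0 <= t * (2 * `|dl|) by rewrite mulr_ge0 // ?ltW // mulr_ge0.
      nra.
    have := H (xt, fu * E) hl.
    rewrite /subp /= hxt -/Nn => /(_ hNd).
    rewrite /dotp /= dotvC dotvZl dotvC => hfin.
    set g := e / M in hfin.
    have hg : g * M = e by rewrite /g -mulrA mulVf ?gt_eqF // mulr1.
    have g0 : 0 < g by rewrite divr_gt0.
    have h1 : t * dotv v w <= t * (k * dl + e).
      have : g * Nn <= g * (t * (M - 1)) by rewrite ler_wpM2l // ltW.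
      have hA : nu * fu * (- (t * dl)) <= nu * fu * (E - 1).
        by apply: ler_wpM2l; [apply: mulr_ge0; exact: ltW | lra].
      have hB : g * (t * (M - 1)) = t * e - g * t.
        by rewrite -hg; ring.
      have hC : 0 <= g * t by rewrite mulr_ge0 // ltW.
      rewrite /k => hD.
      have hr2 : nu * (fu * E - fu) = nu * fu * (E - 1) by ring.
      rewrite hr2 in hfin.
      nra.
    by move: h1; rewrite ler_pM2l.
  - by rewrite hc.
  - rewrite hc scalerA mulVf ?gt_eqF // scale1r; congr pair.
    rewrite /ki /k; field.
    by rewrite hnu gt_eqF.
have e1 := f_equal fst heq; have e2 := f_equal snd heq; simpl in e1, e2; rewrite e1 e2.
split; last first.
  rewrite /dotp /= dotvC dotvZl.
  rewrite mulrA mulfV ?gt_eqF // mul1r -[X in _ + X]mulr1 -mulrDr mulrC addrC mulfV // gt_eqF //.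
move=> eps he.
set c := 1 + dotv p u in hc *.
set K := \sum_(i < d) `|p 0 i|.
have hK : 0 <= K by exact: sum_abs_ge0.
exists (Num.min (2 * (K + 1))^-1 (eps * c / (2 * K ^+ 2 + 1))).
  rewrite lt_min invr_gt0 divr_gt0 ?mulr_gt0 //; last first.
    by rewrite ltr_pwDr // mulr_ge0 // sqr_ge0.
  lra.
move=> [x y] /= [_ hy] hN.
rewrite /subp /= in hN *.
set h := x - u in hN *.
set N := normp (h, y - fu) in hN *.
have hN0 : 0 <= N by exact: sqrtr_ge0.
move: hN; rewrite le_min => /andP[hN1 hN2].
set t := dotv p h.
have ht : `|t| <= K * N.
  apply: le_trans (dot_bound p h) _.
  by rewrite ler_wpM2l // nv_le_normp.
have ht2 : `|t| <= 2^-1.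
  apply: le_trans ht _.
  set w := (2 * (K + 1))^-1 in hN1.
  have hw : w * (2 * (K + 1)) = 1 by rewrite mulVf // gt_eqF //; lra.
  have hw0 : 0 < w by rewrite invr_gt0; lra.
  nra.
have hyf : y <= fu * expR (- t).
  apply: le_trans (ler_norm y) _; apply: le_trans hy _.
  case E: (psi x) => [rx| |].
  - have := hp x; rewrite hr E -EFinD lee_fin -/h -/t => hrx.
    rewrite (expneg_fin E) hfu -expRD ler_expR; lra.
  - by rewrite (expneg_inf E) mulr_ge0 // ltW // expR_gt0.
  - by have := hninf x; rewrite E.
have hE := exp_quad t ht2.
have [ht3 ht4] : - (K * N) <= t /\ t <= K * N.
  by move: ht; rewrite ler_norml => /andP[].
have tsq : t ^+ 2 <= K ^+ 2 * N ^+ 2.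
  have : 0 <= K * N by rewrite mulr_ge0.
  nra.
set E := expR (- t) in hyf hE.
set fi := fu^-1.
have hfi : fi * fu = 1 by rewrite mulVf // gt_eqF.
have hfi0 : 0 < fi by rewrite invr_gt0.
have s1 : fi * (y - fu) <= E - 1 by nra.
have s2 : t + fi * (y - fu) <= 2 * K ^+ 2 * N ^+ 2 by nra.
have s3 : 2 * K ^+ 2 * N ^+ 2 <= eps * c * N.
  set g := (2 * K ^+ 2 + 1)^-1 in hN2.
  have hg0 : 0 < 2 * K ^+ 2 + 1 by rewrite ltr_pwDr // mulr_ge0 // sqr_ge0.
  have hg : g * (2 * K ^+ 2 + 1) = 1 by rewrite mulVf // gt_eqF.
  have hN3 : N * (2 * K ^+ 2 + 1) <= eps * c.
    have -> : eps * c = (eps * c / (2 * K ^+ 2 + 1)) * (2 * K ^+ 2 + 1).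
      by rewrite -mulrA mulVf ?mulr1 // gt_eqF.
    by rewrite ler_wpM2r // ltW.
  nra.
rewrite /dotp /= dotvZl -/t.
set ci := c^-1.
have hci : ci * c = 1 by rewrite mulVf // gt_eqF.
have hci0 : 0 < ci by rewrite invr_gt0.
have -> : ci * t + fu^-1 / c * (y - fu) = ci * (t + fi * (y - fu)).
  by rewrite /ci /fi; ring.
nra.
Qed.
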